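(* For each $w\in\{1,2,3,4,5\}$, the function $z\mapsto g_w(e^z)$ is concave on the interval $\big[\ln(1-(1/2)^w),0\big]$.
   Context: $h(t)=(1-t)\left[\psi-\left(\frac{t}{1-t}\right)^{\chi}\right]$ with $\psi=13/10$, $\chi=1/2$, and for a positive integer $w$, $g_w(y)=\frac{1-y}{y}\,h\big((1-y)^{1/w}\big)$. *)

(* Defs.v *)
From HB Require Import structures.
From mathcomp Require Import all_boot all_order all_algebra.
From mathcomp Require Import all_classical all_reals all_analysis.
Set Implicit Arguments. Unset Strict Implicit. Unset Printing Implicit Defensive.
Import Order.TTheory GRing.Theory Num.Theory.
Local Open Scope ring_scope.

Definition psi {R : realType} : R := 13%:R / 10%:R.
Definition chi {R : realType} : R := 1 / 2%:R.

Definition h {R : realType} (t : R) : R :=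
  (1 - t) * (psi - (t / (1 - t)) `^ chi).

Definition g {R : realType} (w : nat) (y : R) : R :=
  (1 - y) / y * h ((1 - y) `^ (1 / w%:R)).

Definition concave_on {R : realType} (f : R -> R) (a b : R) : Prop :=
  forall x y l : R, a <= x <= b -> a <= y <= b -> 0 <= l <= 1 ->
    l * f x + (1 - l) * f y <= f (l * x + (1 - l) * y).

(* Main.v *)
Require Import Defs.
From HB Require Import structures.
From mathcomp Require Import all_boot all_order all_algebra.
From mathcomp Require Import all_classical all_reals all_analysis.
From mathcomp Require Import ring lra.
Import Order.TTheory GRing.Theory Num.Theory.
Import numFieldNormedType.Exports.
Local Open Scope ring_scope.
Set Implicit Arguments. Unset Strict Implicit.
Section H.
Variable R : realType.
Implicit Types (f g : R -> R) (x a b : R).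
Lemma D_add f g x a b : is_derive x 1 f a -> is_derive x 1 g b ->
  is_derive x 1 (fun t => f t + g t) (a + b).
Proof. move=> Hf Hg; exact: (is_deriveD Hf Hg). Qed.
Lemma D_sub f g x a b : is_derive x 1 f a -> is_derive x 1 g b ->
  is_derive x 1 (fun t => f t - g t) (a - b).
Proof. move=> Hf Hg; exact: (is_deriveB Hf Hg). Qed.
Lemma D_mul f g x a b : is_derive x 1 f a -> is_derive x 1 g b ->
  is_derive x 1 (fun t => f t * g t) (f x * b + g x * a).
Proof. move=> Hf Hg; exact: (is_deriveM Hf Hg). Qed.
Lemma D_inv (f : R -> R) x a : is_derive x 1 f a -> f x != 0 ->
  is_derive x 1 (fun t => (f t)^-1) (- a / (f x)^+2).
Proof. move=> Hf H; have [d1 d2] := is_deriveV H Hf; split => //; rewrite d2.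
by rewrite /GRing.scale/= mulNr [in LHS]mulrC mulNr. Qed.
Lemma D_comp f g x a b : is_derive (g x) 1 f a -> is_derive x 1 g b ->
  is_derive x 1 (fun t => f (g t)) (a * b).
Proof. move=> Hf Hg; exact: (@is_derive1_comp R f g x a b Hf Hg). Qed.
Lemma D_cst (c : R) x : is_derive x 1 (fun _ : R => c) 0.
Proof. exact: is_derive_cst. Qed.
Lemma D_id x : is_derive x 1 (fun t : R => t) 1.
Proof. exact: is_derive_id. Qed.
Lemma D_exp x : is_derive x 1 (@expR R) (expR x).
Proof. exact: is_derive_expR. Qed.
Lemma D_pow g x b r : is_derive x 1 g b -> 0 < g x ->
  is_derive x 1 (fun t => g t `^ r) (r * g x `^ (r - 1) * b).
Proof. move=> Hg H. have := D_comp (is_derive1_powR r H) Hg. exact. Qed.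
End H.
Section G.
Variable R : realType.
Implicit Types x : R.
Definition Af x : R := 1 + x ^+ 2.
Definition Bf w x : R := Af x ^+ w - (x ^+ 2) ^+ w.
Definition Tf w x : R := Af x ^+ w.-1 - (x ^+ 2) ^+ w.-1.
Definition Df w x : R := Af x * Bf w x.
Definition Nf w x : R :=
  (- (2 * w%:R * psi) + (2 * w%:R + 1) * x) * Df w x
  + 2 * x ^+ 2 * (psi - x) * (Bf w x + w%:R * (Af x * Tf w x)).
Definition dAf x : R := 2 * x.
Definition dBf w x : R := w%:R * Af x ^+ w.-1 * dAf x - w%:R * (x ^+ 2) ^+ w.-1 * (2 * x).
Definition dTf w x : R := (w.-1)%:R * Af x ^+ w.-1.-1 * dAf x - (w.-1)%:R * (x ^+ 2) ^+ w.-1.-1 * (2 * x).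
Definition dDf w x : R := dAf x * Bf w x + Af x * dBf w x.
Definition dNf w x : R :=
  (2 * w%:R + 1) * Df w x + (- (2 * w%:R * psi) + (2 * w%:R + 1) * x) * dDf w x
  + (4 * x * (psi - x) - 2 * x ^+ 2) * (Bf w x + w%:R * (Af x * Tf w x))
  + 2 * x ^+ 2 * (psi - x) * (dBf w x + w%:R * (dAf x * Tf w x + Af x * dTf w x)).
Definition Gf w x : R := Nf w x / (2 * w%:R * Df w x).
Definition Uf w (z : R) : R := (1 - expR z) `^ (1 / w%:R).
Definition Sf w (z : R) : R := (Uf w z / (1 - Uf w z)) `^ chi.

Lemma D_X (f : R -> R) x a n : is_derive x 1 f a ->
  is_derive x 1 (fun t => f t ^+ n) (n%:R * f x ^+ n.-1 * a).
Proof.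
move=> Hf; have [d1 d2] := is_deriveX n Hf.
have E : (f ^+ n) = (fun t => f t ^+ n) by apply/funext => t; rewrite exprfctE.
rewrite E in d1 d2; split => //; rewrite d2.
Qed.
Lemma D_eq (f1 f2 : R -> R) x a b : f1 = f2 -> a = b ->
  is_derive x 1 f1 a -> is_derive x 1 f2 b.
Proof. by move=> -> ->. Qed.

Lemma powRm1 (e r : R) : 0 < e -> e `^ (r - 1) = e `^ r / e.
Proof.
move=> e0; rewrite powRB ?powRr1 ?ltW //.
by apply/implyP => _; rewrite gt_eqF.
Qed.

Lemma dF w (z : R) : (0 < w)%N -> (w <= 5)%N -> z < 0 ->
  is_derive z 1 (fun t => g w (expR t)) (Gf w (Sf w z)).
Proof.
move=> w0 w5 z0.
have y0 : 0 < expR z := expR_gt0 z.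
have y1 : expR z < 1 by rewrite expR_lt1.
have e0 : 0 < 1 - expR z by rewrite subr_gt0.
have k0 : 0 < 1 / w%:R :> R by rewrite divr_gt0 // ltr0n.
have dE := D_sub (D_cst 1 z) (D_exp z).
have dU := D_pow (1 / w%:R) dE e0.
have u0 : 0 < Uf w z by apply: powR_gt0.
have u1 : Uf w z < 1.
  apply: (@lt_le_trans _ _ (1 `^ (1/w%:R))); last (by rewrite powR1 /=; apply: lexx).
  rewrite /Uf gt0_ltr_powR ?nnegrE ?ltW //; lra.
have d1U := D_sub (D_cst 1 z) dU.
have u1' : 0 < 1 - Uf w z by rewrite subr_gt0.
have dInv := D_inv d1U (lt0r_neq0 u1').
have dV := D_mul dU dInv.
have v0 : 0 < Uf w z * (1 - Uf w z)^-1 by rewrite divr_gt0.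
have dS := D_pow chi dV v0.
have dH := D_mul d1U (D_sub (D_cst psi z) dS).
have dQ := D_mul dE (D_inv (D_exp z) (lt0r_neq0 y0)).
have dFz := D_mul dQ dH.
apply: (D_eq _ _ dFz); first by [].
rewrite -/(Uf w z) (powRm1 _ e0) -/(Uf w z) (powRm1 _ v0) -/(Sf w z).
have s0 : 0 < Sf w z by apply: powR_gt0.
have Hs : Sf w z ^+ 2 = Uf w z / (1 - Uf w z).
  by rewrite /Sf /chi div1r powR12_sqrt ?sqr_sqrtr // ltW.
have Hw : Uf w z ^+ w = 1 - expR z.
  rewrite -powR_mulrn ?powR_ge0 // /Uf -powRrM mul1r mulVf ?powRr1 ?ltW //.
  by rewrite pnatr_eq0 -lt0n.
have Hu : Uf w z = Sf w z ^+ 2 / (1 + Sf w z ^+ 2).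
  rewrite Hs; field; rewrite ?subr_eq0 ?gt_eqF //; lra.
have Hy : expR z = 1 - Uf w z ^+ w by rewrite Hw; ring.
move: Hy Hu s0 => Hy Hu s0.
set y := expR z in Hy *; set u := Uf w z in Hy Hu *; set s := Sf w z in Hu s0 *.
clearbody y u s.
rewrite Hy Hu /Gf /Nf /Df /Bf /Tf /Af /psi /chi.
move: w0 w5 s0; clear => w0 w5 s0.
have f1 : 0 < s ^+ 2 by rewrite exprn_gt0.
have f0 : 0 < 1 + s ^+ 2 by lra.
move: w0 w5; case: w => [//|[|[|[|[|[|//]]]]]] => _ _; simpl predn; field;
  (match goal with |- context [(s ^+ 2) ^+ ?n] =>
     have f2 : 0 < (s ^+ 2) ^+ n by rewrite exprn_gt0
   | _ => idtac end);
  (match goal with |- context [(s ^+ 2) ^+ ?n] =>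
     have f3 : (s ^+ 2) ^+ n < (1 + s ^+ 2) ^+ n by rewrite ltrXn2r ?ltW //; lra
   | _ => idtac end);
  repeat (apply/andP; split); apply: lt0r_neq0; lra.
Qed.

Lemma dA x : is_derive x 1 Af (dAf x).
Proof.
apply: (D_eq _ _ (D_add (D_cst 1 x) (D_X 2 (D_id x)))) => //.
by rewrite /dAf /= expr1; ring.
Qed.

Lemma dB w x : is_derive x 1 (Bf w) (dBf w x).
Proof.
apply: (D_eq _ _ (D_sub (D_X w (dA x)) (D_X w (D_X 2 (D_id x))))) => //.
by rewrite /dBf /= expr1; ring.
Qed.

Lemma dT w x : is_derive x 1 (Tf w) (dTf w x).
Proof.
apply: (D_eq _ _ (D_sub (D_X w.-1 (dA x)) (D_X w.-1 (D_X 2 (D_id x))))) => //.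
by rewrite /dTf /= expr1; ring.
Qed.

Lemma dD w x : is_derive x 1 (Df w) (dDf w x).
Proof.
apply: (D_eq _ _ (D_mul (dA x) (dB w x))) => //.
by rewrite /dDf; ring.
Qed.

Lemma dN w x : is_derive x 1 (Nf w) (dNf w x).
Proof.
apply: (D_eq _ _ (D_add (D_mul (D_add (D_cst (- (2 * w%:R * psi)) x) (D_mul (D_cst (2 * w%:R + 1) x) (D_id x))) (dD w x))
  (D_mul (D_mul (D_mul (D_cst 2 x) (D_X 2 (D_id x))) (D_sub (D_cst psi x) (D_id x)))
     (D_add (dB w x) (D_mul (D_cst w%:R x) (D_mul (dA x) (dT w x))))))) => //.
by rewrite /dNf /= expr1; ring.
Qed.

Lemma Df_gt0 w x : (0 < w)%N -> 0 < Df w x.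
Proof.
move=> w0; rewrite /Df /Bf /Af; have x2 : 0 <= x ^+ 2 by apply: sqr_ge0.
apply: mulr_gt0; first lra.
by rewrite subr_gt0 ltrXn2r // -?lt0n //; lra.
Qed.

Lemma dG w x : (0 < w)%N -> is_derive x 1 (Gf w)
  ((dNf w x * Df w x - Nf w x * dDf w x) / (2 * w%:R * Df w x ^+ 2)).
Proof.
move=> w0; have D0 := Df_gt0 x w0.
have c0 : 0 < 2 * w%:R :> R by rewrite mulr_gt0 // ltr0n.
have nz : 2 * w%:R * Df w x != 0 by rewrite mulf_neq0 // gt_eqF.
apply: (D_eq _ _ (D_mul (dN w x) (D_inv (D_mul (D_cst (2 * w%:R) x) (dD w x)) nz))) => //.
by field; rewrite gt_eqF // pnatr_eq0 -lt0n.
Qed.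

Lemma powS_le x k : 0 <= x <= 1 -> x ^+ k.+1 <= x ^+ k.
Proof. move=> /andP[x0 x1]; rewrite exprSr ler_piMr // exprn_ge0 //. Qed.
Lemma pow_ge0 x k : 0 <= x -> 0 <= x ^+ k.
Proof. exact: exprn_ge0. Qed.

Lemma Pq1 x : 0 <= x <= 1 -> 0 <= dNf 1 x * Df 1 x - Nf 1 x * dDf 1 x.
Proof.
move=> hx; have x0 : 0 <= x by case/andP: hx.
have E : 5 * (dNf 1 x * Df 1 x - Nf 1 x * dDf 1 x) = 15 + 26*x + 5*x^+4.
  rewrite /dNf /Nf /dDf /Df /dBf /dTf /Tf /Bf /dAf /Af /psi; simpl predn.
  by field.
suff : 0 < 5 * (dNf 1 x * Df 1 x - Nf 1 x * dDf 1 x) by lra.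
rewrite E. have := pow_ge0 4 x0. lra.
Qed.

Lemma Pq2 x : 0 <= x <= 1 -> 0 <= dNf 2 x * Df 2 x - Nf 2 x * dDf 2 x.
Proof.
move=> hx; have x0 : 0 <= x by case/andP: hx.
have E : 5 * (dNf 2 x * Df 2 x - Nf 2 x * dDf 2 x) = 25 + 78*x + 60*x^+2 + 208*x^+3 + 35*x^+4 + 156*x^+5 + 20*x^+8.
  rewrite /dNf /Nf /dDf /Df /dBf /dTf /Tf /Bf /dAf /Af /psi; simpl predn.
  by field.
suff : 0 < 5 * (dNf 2 x * Df 2 x - Nf 2 x * dDf 2 x) by lra.
rewrite E. have := pow_ge0 2 x0. have := pow_ge0 3 x0. have := pow_ge0 4 x0. have := pow_ge0 5 x0. have := pow_ge0 8 x0. lra.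
Qed.

Lemma Pq3 x : 0 <= x <= 1 -> 0 <= dNf 3 x * Df 3 x - Nf 3 x * dDf 3 x.
Proof.
move=> hx; have x0 : 0 <= x by case/andP: hx.
have E : 5 * (dNf 3 x * Df 3 x - Nf 3 x * dDf 3 x) = 35 + 104*x + 160*x^+2 + 624*x^+3 + 220*x^+4 + (1*1000+326)*x^+5 + 60*x^+6 + (1*1000+248)*x^+7 - 60*x^+8 + 468*x^+9 + 45*x^+12.
  rewrite /dNf /Nf /dDf /Df /dBf /dTf /Tf /Bf /dAf /Af /psi; simpl predn.
  by field.
suff : 0 < 5 * (dNf 3 x * Df 3 x - Nf 3 x * dDf 3 x) by lra.
rewrite E. have := powS_le 7 hx. have := pow_ge0 2 x0. have := pow_ge0 3 x0. have := pow_ge0 4 x0. have := pow_ge0 5 x0. have := pow_ge0 6 x0. have := pow_ge0 7 x0. have := pow_ge0 8 x0. have := pow_ge0 9 x0. have := pow_ge0 12 x0. lra.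
Qed.

Lemma Pq4 x : 0 <= x <= 1 -> 0 <= dNf 4 x * Df 4 x - Nf 4 x * dDf 4 x.
Proof.
move=> hx; have x0 : 0 <= x by case/andP: hx.
have E : 5 * (dNf 4 x * Df 4 x - Nf 4 x * dDf 4 x) = 45 + 130*x + 300*x^+2 + (1*1000+40)*x^+3 + 775*x^+4 + (3*1000+640)*x^+5 + 800*x^+6 + (6*1000+864)*x^+7 - 80*x^+8 + (7*1000+280)*x^+9 - 800*x^+10 + (4*1000+160)*x^+11 - 500*x^+12 + (1*1000+40)*x^+13 + 80*x^+16.
  rewrite /dNf /Nf /dDf /Df /dBf /dTf /Tf /Bf /dAf /Af /psi; simpl predn.
  by field.
suff : 0 < 5 * (dNf 4 x * Df 4 x - Nf 4 x * dDf 4 x) by lra.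
rewrite E. have := powS_le 7 hx. have := powS_le 9 hx. have := powS_le 11 hx. have := pow_ge0 2 x0. have := pow_ge0 3 x0. have := pow_ge0 4 x0. have := pow_ge0 5 x0. have := pow_ge0 6 x0. have := pow_ge0 7 x0. have := pow_ge0 8 x0. have := pow_ge0 9 x0. have := pow_ge0 10 x0. have := pow_ge0 11 x0. have := pow_ge0 12 x0. have := pow_ge0 13 x0. have := pow_ge0 16 x0. lra.
Qed.

Lemma Pq5 x : 0 <= x <= 1 -> 0 <= dNf 5 x * Df 5 x - Nf 5 x * dDf 5 x.
Proof.
move=> hx; have x0 : 0 <= x by case/andP: hx.
have E : 5 * (dNf 5 x * Df 5 x - Nf 5 x * dDf 5 x) = 55 + 156*x + 480*x^+2 + (1*1000+560)*x^+3 + (1*1000+770)*x^+4 + (7*1000+20)*x^+5 + (3*1000+400)*x^+6 + (18*1000+720)*x^+7 + (2*1000+925)*x^+8 + (32*1000+110)*x^+9 - (1*1000+0)*x^+10 + (35*1000+880)*x^+11 - (4*1000+850)*x^+12 + (25*1000+350)*x^+13 - (4*1000+500)*x^+14 + (10*1000+400)*x^+15 - (1*1000+625)*x^+16 + (1*1000+950)*x^+17 + 125*x^+20.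
  rewrite /dNf /Nf /dDf /Df /dBf /dTf /Tf /Bf /dAf /Af /psi; simpl predn.
  by field.
suff : 0 < 5 * (dNf 5 x * Df 5 x - Nf 5 x * dDf 5 x) by lra.
rewrite E. have := powS_le 9 hx. have := powS_le 11 hx. have := powS_le 13 hx. have := powS_le 15 hx. have := pow_ge0 2 x0. have := pow_ge0 3 x0. have := pow_ge0 4 x0. have := pow_ge0 5 x0. have := pow_ge0 6 x0. have := pow_ge0 7 x0. have := pow_ge0 8 x0. have := pow_ge0 9 x0. have := pow_ge0 10 x0. have := pow_ge0 11 x0. have := pow_ge0 12 x0. have := pow_ge0 13 x0. have := pow_ge0 14 x0. have := pow_ge0 15 x0. have := pow_ge0 16 x0. have := pow_ge0 17 x0. have := pow_ge0 20 x0. lra.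
Qed.

Lemma Pq w x : (0 < w)%N -> (w <= 5)%N -> 0 <= x <= 1 ->
  0 <= dNf w x * Df w x - Nf w x * dDf w x.
Proof.
case: w => [//|[|[|[|[|[|//]]]]]] => _ _.
- exact: Pq1. - exact: Pq2. - exact: Pq3. - exact: Pq4. - exact: Pq5.
Qed.

Local Open Scope classical_set_scope.
Lemma Gf_mono w s t : (0 < w)%N -> (w <= 5)%N ->
  0 <= s -> s <= t -> t <= 1 -> Gf w s <= Gf w t.
Proof.
move=> w0 w5 s0 st t1.
have H1 : forall x : R, x \in `]0, 1[%R -> derivable (Gf w) x 1.
  by move=> x _; case: (dG x w0).
have H2 : forall x : R, x \in `]0, 1[%R -> 0 <= ((Gf w)^`()%classic x).
  move=> x; rewrite in_itv /= => /andP[x0 x1].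
  rewrite derive1E; have [_ ->] := dG x w0.
  apply: divr_ge0; first by apply: Pq => //; rewrite ltW // ltW.
  by rewrite mulr_ge0 // ?exprn_ge0 // ?ltW ?Df_gt0 // mulr_ge0 // ler0n.
have H3 : {within `[(0:R), 1], continuous (Gf w)}.
  apply/continuous_subspaceT => r.
  have [dd _] := dG r w0; exact/differentiable_continuous/derivable1_diffP.
exact: (@ger0_derive1_ndecr R (Gf w) 0 1 H1 H2 H3 s t s0 st t1).
Qed.
End G.

Section C.
Local Open Scope classical_set_scope.
Variable R : realType.
Lemma concave_of_deriv (f df : R -> R) (a b : R) :
  (forall x, a < x < b -> is_derive x 1 f (df x)) ->
  (forall x y, a < x -> x <= y -> y < b -> df y <= df x) ->
  {within `[a, b], continuous f} -> concave_on f a b.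
Proof.
move=> Hd Hm Hc.
suff H : forall x y l, a <= x <= b -> a <= y <= b -> 0 <= l <= 1 -> x <= y ->
    l * f x + (1 - l) * f y <= f (l * x + (1 - l) * y).
  move=> x y l hx hy hl; case: (leP x y) => [xy|yx]; first exact: H.
  have hl' : 0 <= 1 - l <= 1 by move: hl => /andP[? ?]; apply/andP; split; lra.
  have := H y x (1 - l) hy hx hl' (ltW yx).
  have -> : 1 - (1 - l) = l by ring.
  by rewrite addrC [l * x + _]addrC.
move=> x y l /andP[ax xb] /andP[ay yb] /andP[l0 l1] xy.
case: (eqVneq x y) => [<-|xney].
  have -> : l * x + (1 - l) * x = x by ring.
  by have -> : l * f x + (1 - l) * f x = f x by ring.
have {xney} xy' : x < y by rewrite lt_neqAle xney.
case: (eqVneq l 0) => [->|ln0].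
  by rewrite !mul0r !add0r subr0 !mul1r.
case: (eqVneq l 1) => [->|ln1].
  by rewrite subrr !mul0r !addr0 !mul1r.
have l0' : 0 < l by rewrite lt_neqAle eq_sym ln0.
have l1' : l < 1 by rewrite lt_neqAle ln1.
set p := l * x + (1 - l) * y.
have xp : x < p by rewrite /p; nra.
have py : p < y by rewrite /p; nra.
have sub : forall c d, a <= c -> d <= b ->
    {within `[c, d], continuous f}.
  move=> c d ac db; apply: continuous_subspaceW Hc => t /=.
  rewrite !in_itv /= => /andP[h1 h2]; apply/andP; split; lra.
have D1 : forall c d, a <= c -> d <= b -> forall t, t \in `]c, d[%R -> is_derive t 1 f (df t).
  move=> c d ac db t; rewrite in_itv /= => /andP[h1 h2]; apply: Hd; apply/andP; split; lra.
have pb : p <= b by lra.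
have ap : a <= p by lra.
have [c1 hc1 E1] := MVT xp (D1 _ _ ax pb) (sub x p ax pb).
have [c2 hc2 E2] := MVT py (D1 _ _ ap yb) (sub p y ap yb).
move: hc1 hc2; rewrite !in_itv /= => /andP[c1a c1b] /andP[c2a c2b].
have Hle : df c2 <= df c1 by apply: Hm; lra.
have -> : f x = f p - df c1 * (p - x) by rewrite -E1; ring.
have -> : f y = f p + df c2 * (y - p) by rewrite -E2; ring.
have K : 0 <= l * (1 - l) * (y - x) by apply: mulr_ge0; [apply: mulr_ge0|]; lra.
have -> : l * (f p - df c1 * (p - x)) + (1 - l) * (f p + df c2 * (y - p)) =
  f p + l * (1 - l) * (y - x) * (df c2 - df c1) by rewrite /p; ring.
rewrite gerDl; apply: mulr_ge0_le0 => //; lra.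
Qed.
End C.

Section Final.
Variable R : realType.
Local Open Scope classical_set_scope.

Lemma a0_neg w : (0 < w)%N -> ln (1 - (1 / 2%:R) ^+ w) < 0 :> R.
Proof.
move=> w0; have h0 : 0 < (1 / 2%:R) ^+ w :> R by rewrite exprn_gt0 // divr_gt0.
have h1 : (1 / 2%:R) ^+ w <= 1 / 2%:R :> R.
  rewrite -[X in _ <= X]expr1 ler_wiXn2l // ?divr_ge0 //.
  by rewrite ler_pdivrMr // mul1r ler1n.
apply: ln_lt0; apply/andP; split; lra.
Qed.

Lemma expa0 w : (0 < w)%N -> expR (ln (1 - (1 / 2%:R) ^+ w)) = 1 - (1 / 2%:R) ^+ w :> R.
Proof.
move=> w0; have h0 : 0 < (1 / 2%:R) ^+ w :> R by rewrite exprn_gt0 // divr_gt0.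
have h1 : (1 / 2%:R) ^+ w <= 1 / 2%:R :> R.
  rewrite -[X in _ <= X]expr1 ler_wiXn2l // ?divr_ge0 //.
  by rewrite ler_pdivrMr // mul1r ler1n.
by rewrite lnK // posrE; lra.
Qed.

Lemma Uf_bnd w (z : R) : (0 < w)%N -> z < 0 -> 0 < Uf w z < 1.
Proof.
move=> w0 z0.
have y0 : 0 < expR z := expR_gt0 z.
have e0 : 0 < 1 - expR z by rewrite subr_gt0 expR_lt1.
have k0 : 0 < 1 / w%:R :> R by rewrite divr_gt0 // ltr0n.
apply/andP; split; first by apply: powR_gt0.
apply: (@lt_le_trans _ _ (1 `^ (1/w%:R))); last (by rewrite powR1 /=; apply: lexx).
rewrite /Uf gt0_ltr_powR ?nnegrE ?ltW //; lra.
Qed.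

Lemma Uf_pow w (z : R) : (0 < w)%N -> z < 0 -> Uf w z ^+ w = 1 - expR z.
Proof.
move=> w0 z0.
have e0 : 0 < 1 - expR z by rewrite subr_gt0 expR_lt1.
rewrite -powR_mulrn ?powR_ge0 // /Uf -powRrM mul1r mulVf ?powRr1 ?ltW //.
by rewrite pnatr_eq0 -lt0n.
Qed.

Lemma powR_le (a b r : R) : 0 <= a -> a <= b -> 0 <= r -> a `^ r <= b `^ r.
Proof. move=> a0 ab r0; apply: ge0_ler_powR => //; rewrite nnegrE //; lra. Qed.

Lemma powR_le1 (a r : R) : 0 <= a -> a <= 1 -> 0 <= r -> a `^ r <= 1.
Proof. by move=> a0 a1 r0; have := powR_le a0 a1 r0; rewrite powR1. Qed.

Lemma v_ge0 (u : R) : 0 < u -> u < 1 -> 0 <= u / (1 - u).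
Proof. by move=> u0 u1; rewrite divr_ge0 // ?subr_ge0 ltW. Qed.

Lemma v_le1 (u : R) : 0 < u -> u <= 1 / 2%:R -> u / (1 - u) <= 1.
Proof. by move=> u0 uh; rewrite ler_pdivrMr ?mul1r; lra. Qed.

Lemma chi_ge0 : 0 <= chi :> R.
Proof. by rewrite /chi divr_ge0. Qed.

Lemma k_ge0 (w : nat) : 0 <= 1 / w%:R :> R.
Proof. by rewrite divr_ge0. Qed.

Lemma half_bound (u e : R) (w : nat) : (0 < w)%N -> 0 < u -> u ^+ w = e ->
  e < (1 / 2%:R) ^+ w -> u <= 1 / 2%:R.
Proof.
move=> w0 u0 ue eh; rewrite leNgt; apply/negP => hu.
have : (1 / 2%:R) ^+ w < u ^+ w :> R.
  by rewrite ltrXn2r -?lt0n // divr_ge0.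
lra.
Qed.

Lemma Sf_le1 w (z : R) : (0 < w)%N -> ln (1 - (1 / 2%:R) ^+ w) < z -> z < 0 ->
  Sf w z <= 1.
Proof.
move=> w0 az z0.
have H2 := expa0 w0.
have H1 : expR (ln (1 - (1 / 2%:R) ^+ w)) < expR z by rewrite ltr_expR.
rewrite H2 in H1.
have Hp := Uf_pow w0 z0; have /andP[u0 u1] := Uf_bnd w0 z0.
have uh : Uf w z <= 1 / 2%:R.
  apply: (half_bound w0 u0 Hp); lra.
exact: (powR_le1 (v_ge0 u0 u1) (v_le1 u0 uh) chi_ge0).
Qed.

Lemma divmono (a b : R) : a <= b -> b < 1 -> a / (1 - a) <= b / (1 - b).
Proof.
move=> ab b1; rewrite ler_pdivrMr ?subr_gt0 //; last lra.
rewrite mulrAC ler_pdivlMr ?subr_gt0 //; nra.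
Qed.

Lemma Sf_anti w (z1 z2 : R) : (0 < w)%N -> z1 <= z2 -> z2 < 0 ->
  Sf w z2 <= Sf w z1.
Proof.
move=> w0 z12 z2n.
have z1n : z1 < 0 by lra.
have /andP[u10 u11] := Uf_bnd w0 z1n; have /andP[u20 u21] := Uf_bnd w0 z2n.
have e12 : 1 - expR z2 <= 1 - expR z1 by rewrite lerD2l lerN2 ler_expR.
have e0 : 0 <= 1 - expR z2 by rewrite subr_ge0 expR_le1 ltW.
have u12 : Uf w z2 <= Uf w z1 := powR_le e0 e12 (k_ge0 w).
exact: (powR_le (v_ge0 u20 u21) (divmono u12 u11) chi_ge0).
Qed.

Lemma Sf_ge0 w (z : R) : 0 <= Sf w z.
Proof. exact: powR_ge0. Qed.

Lemma g_eq w (z : R) : g w (expR z) =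
  ((1 - expR z) * (expR z)^-1) * ((1 - Uf w z) * (psi - Sf w z)).
Proof. rewrite /g /h /Sf /Uf; reflexivity. Qed.

Lemma Fcont w : (0 < w)%N -> (w <= 5)%N ->
  {within `[ln (1 - (1 / 2%:R) ^+ w), 0], continuous (fun z : R => g w (expR z))}.
Proof.
move=> w0 w5; have a0 := a0_neg w0.
apply/continuous_within_itvP => //; split.
- move=> x; rewrite in_itv /= => /andP[_ x0].
  have [dd _] := dF w0 w5 x0; exact/differentiable_continuous/derivable1_diffP.
- have [dd _] := dF w0 w5 a0.
  have c := differentiable_continuous ((derivable1_diffP _ _).1 dd).
  exact: (cvg_at_right_filter c).
have F0 : g w (expR 0) = 0 :> R by rewrite expR0 /g subrr !mul0r.
rewrite F0.
have dK := D_mul (D_cst psi 0) (D_mul (D_sub (D_cst 1 0) (D_exp 0)) (D_inv (D_exp 0) (lt0r_neq0 (expR_gt0 (0:R))))).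
have [dK1 _] := dK.
have cK := differentiable_continuous ((derivable1_diffP _ _).1 dK1).
have K0 : psi * ((1 - expR 0) * (expR 0)^-1) = 0 :> R by rewrite expR0 subrr mul0r mulr0.
have cK' : psi * ((1 - expR z) * (expR z)^-1) @[z --> (0:R)] -->
   psi * ((1 - expR 0) * (expR 0)^-1) := cK.
rewrite K0 in cK'.
apply: (@squeeze_cvgr _ _ _ _ (fun=> 0) (fun z => psi * ((1 - expR z) * (expR z)^-1))).
- near=> z.
  have z0 : z < 0 by near: z; exact: nbhs_left_lt.
  have za : ln (1 - (1 / 2%:R) ^+ w) < z by near: z; exact: nbhs_left_gt.
  have /andP[u0 u1] := Uf_bnd w0 z0.
  have s1 := Sf_le1 w0 za z0.
  have s0 : 0 <= Sf w z by apply: powR_ge0.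
  have k0 : 0 <= (1 - expR z) * (expR z)^-1.
    by rewrite divr_ge0 ?expR_ge0 // subr_ge0 expR_le1 ltW.
  rewrite g_eq.
  have m0 : 0 <= (1 - Uf w z) * (psi - Sf w z) by rewrite /psi; apply: mulr_ge0; lra.
  have m1 : (1 - Uf w z) * (psi - Sf w z) <= psi by rewrite /psi; nra.
  apply/andP; split; first exact: mulr_ge0.
  by rewrite mulrC ler_wpM2r.
- exact: cvg_cst.
- exact: cvg_at_left_filter cK'.
Unshelve. all: by end_near.
Qed.

End Final.

Unset Implicit Arguments.

Theorem lemma39 (R : realType) (w : nat) :
  (1 <= w <= 5)%N ->
  concave_on (fun z : R => g w (expR z)) (ln (1 - (1 / 2%:R) ^+ w)) 0.
Proof.
move=> /andP[w0 w5].
apply: (@concave_of_deriv R _ (fun z => Gf w (Sf w z))).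
- by move=> x /andP[_ x0]; exact: dF.
- move=> x y ax xy y0.
  have x0 : x < 0 by apply: (le_lt_trans xy).
  exact: (Gf_mono w0 w5 (Sf_ge0 w y) (Sf_anti w0 xy y0) (Sf_le1 w0 ax x0)).
- exact: Fcont.
Qed.
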